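(* Let $p,q>0$ and $0<x,y<\tfrac12$. Then $$B_{p,q}(x,y)\le (2p)^{\frac{2x-1}{2}}(2q)^{\frac{2y-1}{2}}\sqrt{\Gamma(-2x+1,2p)\,\Gamma(-2y+1,2q)}.$$
   Context: $B_{p,q}(x,y)=\int_0^1 t^{x-1}(1-t)^{y-1}\exp\!\left(-\frac{p}{t}-\frac{q}{1-t}\right)dt$ is the extended Beta function, and $\Gamma(s,a)=\int_a^\infty u^{s-1}e^{-u}\,du$ denotes the upper incomplete Gamma function. *)

(* Defs.v *)
From Stdlib Require Import Reals.
From Coquelicot Require Import Coquelicot.
Open Scope R_scope.

Definition extBeta_integrand (p q x y t : R) : R :=
  Rpower t (x - 1) * Rpower (1 - t) (y - 1) * exp (- (p / t) - q / (1 - t)).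

Definition is_extBeta (p q x y v : R) : Prop :=
  is_RInt_gen (extBeta_integrand p q x y) (at_right 0) (at_left 1) v.

Definition is_upperGamma (s a v : R) : Prop :=
  is_RInt_gen (fun u => Rpower u (s - 1) * exp (- u))
    (at_point a) (Rbar_locally p_infty) v.

(* Main.v *)
Require Import Defs.
From Stdlib Require Import Reals Lra Psatz.
From Coquelicot Require Import Coquelicot.
Open Scope R_scope.

Definition gI (s u : R) : R := Rpower u (s - 1) * exp (- u).

Lemma gI_cont s z : 0 < z -> continuous (gI s) z.
Proof.
  intros Hz. apply (@ex_derive_continuous R_AbsRing R_NormedModule). unfold gI, Rpower.
  auto_derive. lra.
Qed.

Lemma gI_ge0 s z : 0 < z -> 0 <= gI s z.
Proof. intros. unfold gI, Rpower. apply Rmult_le_pos; left; apply exp_pos. Qed.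

Lemma gI_ex s u v : 0 < u -> 0 < v -> ex_RInt (gI s) u v.
Proof.
  intros Hu Hv. apply (@ex_RInt_continuous R_CompleteNormedModule). intros z Hz. apply gI_cont.
  assert (0 < Rmin u v) by (apply Rmin_glb_lt; lra). lra.
Qed.

Lemma ball_R (c e y : R) : ball c e y -> Rabs (y - c) < e.
Proof. intros H. exact H. Qed.

Lemma upper_bound s c G : 0 < c ->
  is_RInt_gen (gI s) (at_point c) (Rbar_locally p_infty) G ->
  forall X, c <= X -> RInt (gI s) c X <= G.
Proof.
  intros Hc HG X HX.
  destruct (Rle_lt_dec (RInt (gI s) c X) G) as [h|h]; [exact h|exfalso].
  set (eps := mkposreal _ (ltac:(lra) : 0 < (RInt (gI s) c X - G)/2)).
  specialize (HG (ball G eps) (locally_ball G eps)).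
  destruct HG as [Q R HQ HR HP].
  destruct HR as [M HM].
  set (X' := Rmax X M + 1).
  assert (HX' : M < X') by (unfold X'; generalize (Rmax_r X M); lra).
  assert (HXX' : X <= X') by (unfold X'; generalize (Rmax_l X M); lra).
  destruct (HP c X' HQ (HM X' HX')) as [y [Hy Hb]].
  apply ball_R in Hb. simpl in Hb, Hy.
  apply (@is_RInt_unique R_CompleteNormedModule) in Hy.
  assert (E : RInt (gI s) c X + RInt (gI s) X X' = RInt (gI s) c X').
  { apply (@RInt_Chasles R_CompleteNormedModule); apply gI_ex; lra. }
  assert (0 <= RInt (gI s) X X').
  { apply RInt_ge_0; [lra| apply gI_ex; lra|]. intros; apply gI_ge0; lra. }
  simpl in eps. unfold eps in Hb; simpl in Hb.
  apply Rabs_def2 in Hb. lra.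
Qed.
Lemma id1 p x t : 0 < p -> 0 < t ->
  - Rpower (2 * p) (2 * x - 1) * ((- (2 * p) / t ^ 2) * (Rpower (2 * p / t) (- 2 * x + 1 - 1) * exp (- (2 * p / t))))
  = (Rpower t (x - 1) * exp (- (p / t))) ^ 2.
Proof.
  intros Hp Ht. unfold Rpower. rewrite ln_div by lra.
  replace (exp (- (2 * p / t))) with (exp (- (p / t)) * exp (- (p / t)))
    by (rewrite <- exp_plus; f_equal; field; lra).
  replace (- (2 * p) / t ^ 2) with (- (exp (ln (2 * p)) * exp (- 2 * ln t))).
  2:{ rewrite exp_ln by lra. replace (-2 * ln t) with (- (ln t + ln t)) by ring.
      rewrite exp_Ropp, exp_plus, exp_ln by lra. field; lra. }
  set (E := exp (- (p / t))).
  replace (- exp ((2 * x - 1) * ln (2 * p)) *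
   (- (exp (ln (2 * p)) * exp (-2 * ln t)) *
    (exp ((-2 * x + 1 - 1) * (ln (2 * p) - ln t)) * (E * E))))
  with (exp ((2 * x - 1) * ln (2 * p)) * exp (ln (2 * p)) * exp (-2 * ln t) *
    exp ((-2 * x + 1 - 1) * (ln (2 * p) - ln t)) * (E * E)) by ring.
  rewrite <- !exp_plus.
  replace ((exp ((x - 1) * ln t) * E) ^ 2) with (exp ((x - 1) * ln t) * exp ((x - 1) * ln t) * (E * E)) by ring.
  rewrite <- exp_plus. f_equal. f_equal. ring.
Qed.

Lemma Rpower_pos' a e : 0 < Rpower a e.
Proof. unfold Rpower; apply exp_pos. Qed.

Lemma I1_bound p x G1 a b : 0 < p -> 0 < a -> a < b -> b <= 1 ->
  is_RInt_gen (gI (- 2 * x + 1)) (at_point (2 * p)) (Rbar_locally p_infty) G1 ->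
  exists I1, is_RInt (fun t => (Rpower t (x - 1) * exp (- (p / t))) ^ 2) a b I1
    /\ I1 <= Rpower (2 * p) (2 * x - 1) * G1.
Proof.
  intros Hp Ha Hab Hb HG.
  set (s := - 2 * x + 1).
  assert (Hmm : forall z, Rmin a b <= z <= Rmax a b -> 0 < z).
  { intros z Hz. rewrite Rmin_left in Hz by lra. lra. }
  assert (Hc := @is_RInt_comp R_CompleteNormedModule (gI s) (fun t => 2 * p / t)
     (fun t => - (2 * p) / t ^ 2) a b).
  assert (Hc' : is_RInt (fun y : R => scal (- (2 * p) / y ^ 2) (gI s (2 * p / y))) a b
           (RInt (gI s) (2 * p / a) (2 * p / b))).
  { apply Hc.
    - intros z Hz. apply gI_cont. specialize (Hmm z Hz).
      apply Rdiv_lt_0_compat; lra.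
    - intros z Hz. specialize (Hmm z Hz). split.
      + auto_derive; [lra|field; lra].
      + apply (@ex_derive_continuous R_AbsRing R_NormedModule). auto_derive. assert (0 < z*(z*1)) by nra; lra. }
  clear Hc.
  apply (@is_RInt_scal R_NormedModule _ _ _ (- Rpower (2 * p) (2 * x - 1))) in Hc'.
  eexists. split.
  - eapply is_RInt_ext; [|exact Hc'].
    intros t Ht. rewrite Rmin_left in Ht by lra.
    unfold gI, s. rewrite <- id1 by lra. reflexivity.
  - unfold scal; simpl; unfold mult; simpl.
    rewrite <- (opp_RInt_swap (V:=R_CompleteNormedModule)) by (apply gI_ex; apply Rdiv_lt_0_compat; lra).
    unfold opp; simpl.
    assert (E : RInt (gI s) (2 * p) (2 * p / b) + RInt (gI s) (2 * p / b) (2 * p / a) = RInt (gI s) (2 * p) (2 * p / a)).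
    { apply (@RInt_Chasles R_CompleteNormedModule); apply gI_ex; try apply Rdiv_lt_0_compat; lra. }
    assert (Hb' : 2 * p <= 2 * p / b).
    { unfold Rdiv; rewrite <- (Rmult_1_r (2*p)) at 1; apply Rmult_le_compat_l; [lra|].
      rewrite <- Rinv_1; apply Rinv_le_contravar; lra. }
    assert (Ha' : 2 * p / b <= 2 * p / a).
    { unfold Rdiv. apply Rmult_le_compat_l; [lra|]. apply Rinv_le_contravar; lra. }
    assert (H0 : 0 <= RInt (gI s) (2 * p) (2 * p / b)).
    { apply RInt_ge_0; [lra| apply gI_ex; try apply Rdiv_lt_0_compat; lra|].
      intros; apply gI_ge0; lra. }
    assert (H1 : RInt (gI s) (2 * p) (2 * p / a) <= G1).
    { apply (upper_bound s); [lra|exact HG|lra]. }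
    assert (HC := Rpower_pos' (2 * p) (2 * x - 1)).
    nra.
Qed.

Lemma I2_bound q y G2 a b : 0 < q -> 0 <= a -> a < b -> b < 1 ->
  is_RInt_gen (gI (- 2 * y + 1)) (at_point (2 * q)) (Rbar_locally p_infty) G2 ->
  exists I2, is_RInt (fun t => (Rpower (1 - t) (y - 1) * exp (- (q / (1 - t)))) ^ 2) a b I2
    /\ I2 <= Rpower (2 * q) (2 * y - 1) * G2.
Proof.
  intros Hq Ha Hab Hb HG.
  set (s := - 2 * y + 1).
  assert (Hmm : forall z, Rmin a b <= z <= Rmax a b -> z < 1).
  { intros z Hz. rewrite Rmax_right in Hz by lra. lra. }
  assert (Hc := @is_RInt_comp R_CompleteNormedModule (gI s) (fun t => 2 * q / (1 - t))
     (fun t => (2 * q) / (1 - t) ^ 2) a b).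
  assert (Hc' : is_RInt (fun z : R => scal ((2 * q) / (1 - z) ^ 2) (gI s (2 * q / (1 - z)))) a b
           (RInt (gI s) (2 * q / (1 - a)) (2 * q / (1 - b)))).
  { apply Hc.
    - intros z Hz. apply gI_cont. specialize (Hmm z Hz).
      apply Rdiv_lt_0_compat; lra.
    - intros z Hz. specialize (Hmm z Hz). split.
      + auto_derive; [lra|field; lra].
      + apply (@ex_derive_continuous R_AbsRing R_NormedModule). auto_derive.
        assert (0 < (1 - z)*((1 - z)*1)) by nra; lra. }
  clear Hc.
  apply (@is_RInt_scal R_NormedModule _ _ _ (Rpower (2 * q) (2 * y - 1))) in Hc'.
  eexists. split.
  - eapply is_RInt_ext; [|exact Hc'].
    intros t Ht. rewrite Rmax_right in Ht by lra.
    rewrite <- (id1 q y (1 - t)) by lra. unfold gI, s.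
    unfold scal; simpl; unfold mult; simpl. field. lra.
  - unfold scal; simpl; unfold mult; simpl.
    assert (E : RInt (gI s) (2 * q) (2 * q / (1 - a)) + RInt (gI s) (2 * q / (1 - a)) (2 * q / (1 - b)) = RInt (gI s) (2 * q) (2 * q / (1 - b))).
    { apply (@RInt_Chasles R_CompleteNormedModule); apply gI_ex; try apply Rdiv_lt_0_compat; lra. }
    assert (Ha' : 2 * q <= 2 * q / (1 - a)).
    { unfold Rdiv; rewrite <- (Rmult_1_r (2*q)) at 1; apply Rmult_le_compat_l; [lra|].
      rewrite <- Rinv_1; apply Rinv_le_contravar; lra. }
    assert (Hb' : 2 * q / (1 - a) <= 2 * q / (1 - b)).
    { unfold Rdiv. apply Rmult_le_compat_l; [lra|]. apply Rinv_le_contravar; lra. }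
    assert (H0 : 0 <= RInt (gI s) (2 * q) (2 * q / (1 - a))).
    { apply RInt_ge_0; [lra| apply gI_ex; try apply Rdiv_lt_0_compat; lra|].
      intros; apply gI_ge0; lra. }
    assert (H1 : RInt (gI s) (2 * q) (2 * q / (1 - b)) <= G2).
    { apply (upper_bound s); [lra|exact HG|lra]. }
    assert (HC := Rpower_pos' (2 * q) (2 * y - 1)).
    nra.
Qed.

Lemma bound_gen (F : R -> R) B M :
  is_RInt_gen F (at_right 0) (at_left 1) B ->
  (forall a b y, 0 < a -> a < b -> b < 1 -> is_RInt F a b y -> y <= M) ->
  B <= M.
Proof.
  intros HB HM.
  destruct (Rle_lt_dec B M) as [h|h]; [exact h|exfalso].
  set (eps := mkposreal _ (ltac:(lra) : 0 < (B - M)/2)).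
  specialize (HB (ball B eps) (locally_ball B eps)).
  destruct HB as [Q R HQ HR HP].
  destruct HQ as [d1 H1]. destruct HR as [d2 H2].
  set (a := Rmin (d1/2) (1/4)).
  set (b := Rmax (1 - d2/2) (3/4)).
  assert (Ha0 : 0 < a) by (unfold a; apply Rmin_glb_lt; generalize (cond_pos d1); lra).
  assert (Ha1 : a <= 1/4) by (unfold a; apply Rmin_r).
  assert (Ha2 : a <= d1/2) by (unfold a; apply Rmin_l).
  assert (Hb1 : 3/4 <= b) by (unfold b; apply Rmax_r).
  assert (Hb2 : 1 - d2/2 <= b) by (unfold b; apply Rmax_l).
  assert (Hb3 : b < 1) by (unfold b; apply Rmax_lub_lt; generalize (cond_pos d2); lra).
  assert (Qa : Q a).
  { apply H1; [|lra]. unfold ball; simpl; unfold AbsRing_ball, abs, minus, plus, opp; simpl.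
    rewrite Rabs_right; generalize (cond_pos d1); lra. }
  assert (Rb : R b).
  { apply H2; [|lra]. unfold ball; simpl; unfold AbsRing_ball, abs, minus, plus, opp; simpl.
    rewrite Rabs_left; generalize (cond_pos d2); lra. }
  destruct (HP a b Qa Rb) as [y [Hy Hb]].
  simpl in Hy. apply ball_R in Hb. unfold eps in Hb; simpl in Hb.
  apply Rabs_def2 in Hb.
  specialize (HM a b y Ha0 ltac:(lra) Hb3 Hy). lra.
Qed.

Lemma amgm l u v : 0 < l -> u * v <= l / 2 * u ^ 2 + / (2 * l) * v ^ 2.
Proof.
  intros Hl.
  assert (H : l / 2 * u ^ 2 + / (2 * l) * v ^ 2 - u * v = (l * u - v) ^ 2 / (2 * l)) by (field; lra).
  assert (0 <= (l * u - v) ^ 2 / (2 * l)).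
  { apply Rdiv_le_0_compat; [apply pow2_ge_0| lra]. }
  lra.
Qed.

Lemma final_ineq A1 A2 S B : 0 <= A1 -> 0 <= A2 -> 0 <= S -> S * S = A1 * A2 ->
  (forall l, 0 < l -> B <= l / 2 * A1 + / (2 * l) * A2) -> B <= S.
Proof.
  intros H1 H2 HS HSS HB.
  destruct (Rle_lt_dec B S) as [h|h]; [exact h|exfalso].
  destruct (Req_dec S 0) as [S0|S0].
  - subst S. assert (A1 = 0 \/ A2 = 0) by (apply Rmult_integral; lra).
    destruct H as [E|E]; subst.
    + specialize (HB ((A2 + 1) / B) ltac:(apply Rdiv_lt_0_compat; lra)).
      assert (E : / (2 * ((A2 + 1) / B)) * A2 = B * A2 / (2 * (A2 + 1))) by (field; lra).
      rewrite E in HB.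
      assert (B * A2 / (2 * (A2 + 1)) < B).
      { apply (Rmult_lt_reg_r (2 * (A2 + 1))); [lra|]. unfold Rdiv.
        rewrite Rmult_assoc, Rinv_l by lra. nra. }
      lra.
    + specialize (HB (B / (A1 + 1)) ltac:(apply Rdiv_lt_0_compat; lra)).
      assert (E : B / (A1 + 1) / 2 * A1 = B * A1 / (2 * (A1 + 1))) by (field; lra).
      rewrite E in HB.
      assert (B * A1 / (2 * (A1 + 1)) < B).
      { apply (Rmult_lt_reg_r (2 * (A1 + 1))); [lra|]. unfold Rdiv.
        rewrite Rmult_assoc, Rinv_l by lra. nra. }
      lra.
  - assert (HA1 : 0 < A1).
    { destruct (Req_dec A1 0) as [E|E]; [|lra]. subst. nra. }
    specialize (HB (S / A1) ltac:(apply Rdiv_lt_0_compat; lra)).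
    assert (E : S / A1 / 2 * A1 + / (2 * (S / A1)) * A2 = (S * S + A1 * A2) / (2 * S)) by (field; lra).
    rewrite E, HSS in HB.
    assert (E2 : (A1 * A2 + A1 * A2) / (2 * S) = S).
    { rewrite <- HSS. field. lra. }
    lra.
Qed.

Theorem mainTheorem2 (p q x y B G1 G2 : R) :
  0 < p -> 0 < q -> 0 < x < 1/2 -> 0 < y < 1/2 ->
  is_extBeta p q x y B ->
  is_upperGamma (- 2 * x + 1) (2 * p) G1 ->
  is_upperGamma (- 2 * y + 1) (2 * q) G2 ->
  B <= Rpower (2 * p) ((2 * x - 1) / 2) * Rpower (2 * q) ((2 * y - 1) / 2)
       * sqrt (G1 * G2).
Proof.
  intros Hp Hq Hx Hy HB HG1 HG2.
  change (is_RInt_gen (gI (- 2 * x + 1)) (at_point (2 * p)) (Rbar_locally p_infty) G1) in HG1.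
  change (is_RInt_gen (gI (- 2 * y + 1)) (at_point (2 * q)) (Rbar_locally p_infty) G2) in HG2.
  assert (G1p : 0 <= G1).
  { assert (E : RInt (gI (- 2 * x + 1)) (2 * p) (2 * p) = 0) by (apply (RInt_point (V:=R_CompleteNormedModule))). rewrite <- E.
    apply (upper_bound (-2*x+1) (2*p) G1); [lra|exact HG1|lra]. }
  assert (G2p : 0 <= G2).
  { assert (E : RInt (gI (- 2 * y + 1)) (2 * q) (2 * q) = 0) by (apply (RInt_point (V:=R_CompleteNormedModule))). rewrite <- E.
    apply (upper_bound (-2*y+1) (2*q) G2); [lra|exact HG2|lra]. }
  set (C1 := Rpower (2 * p) (2 * x - 1)).
  set (C2 := Rpower (2 * q) (2 * y - 1)).
  assert (C1p : 0 < C1) by apply Rpower_pos'.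
  assert (C2p : 0 < C2) by apply Rpower_pos'.
  apply (final_ineq (C1 * G1) (C2 * G2)).
  - nra.
  - nra.
  - apply Rmult_le_pos; [apply Rmult_le_pos; left; apply Rpower_pos'|apply sqrt_pos].
  - assert (E1 : Rpower (2 * p) ((2 * x - 1) / 2) * Rpower (2 * p) ((2 * x - 1) / 2) = C1).
    { unfold C1, Rpower. rewrite <- exp_plus. f_equal. field. }
    assert (E2 : Rpower (2 * q) ((2 * y - 1) / 2) * Rpower (2 * q) ((2 * y - 1) / 2) = C2).
    { unfold C2, Rpower. rewrite <- exp_plus. f_equal. field. }
    assert (E3 : sqrt (G1 * G2) * sqrt (G1 * G2) = G1 * G2) by (apply sqrt_sqrt; nra).
    transitivity ((Rpower (2 * p) ((2 * x - 1) / 2) * Rpower (2 * p) ((2 * x - 1) / 2)) *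
      (Rpower (2 * q) ((2 * y - 1) / 2) * Rpower (2 * q) ((2 * y - 1) / 2)) *
      (sqrt (G1 * G2) * sqrt (G1 * G2))); [ring|].
    rewrite E1, E2, E3. ring.
  - intros l Hl.
    apply (bound_gen _ _ _ HB).
    intros a b v Ha Hab Hb Hv.
    destruct (I1_bound p x G1 a b Hp Ha Hab ltac:(lra) HG1) as [I1 [HI1 HI1b]].
    destruct (I2_bound q y G2 a b Hq ltac:(lra) Hab Hb HG2) as [I2 [HI2 HI2b]].
    apply (@is_RInt_scal R_NormedModule _ _ _ (l / 2)) in HI1.
    apply (@is_RInt_scal R_NormedModule _ _ _ (/ (2 * l))) in HI2.
    assert (HS := is_RInt_plus _ _ _ _ _ _ HI1 HI2).
    assert (Hle := is_RInt_le _ _ a b _ _ (Rlt_le _ _ Hab) Hv HS).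
    assert (v <= l / 2 * I1 + / (2 * l) * I2).
    { apply Hle. intros t Ht.
      unfold extBeta_integrand. replace (exp (- (p / t) - q / (1 - t))) with (exp (- (p / t)) * exp (- (q / (1 - t)))) by (rewrite <- exp_plus; f_equal; ring).
      unfold plus, scal; simpl; unfold mult; simpl.
      replace (Rpower t (x - 1) * Rpower (1 - t) (y - 1) * (exp (- (p / t)) * exp (- (q / (1 - t)))))
        with ((Rpower t (x - 1) * exp (- (p / t))) * (Rpower (1 - t) (y - 1) * exp (- (q / (1 - t))))) by ring.
      apply amgm; lra. }
    assert (0 < / (2 * l)) by (apply Rinv_0_lt_compat; lra).
    assert (l / 2 * I1 <= l / 2 * (C1 * G1)) by (apply Rmult_le_compat_l; [lra|]; unfold C1; lra).
    assert (/ (2 * l) * I2 <= / (2 * l) * (C2 * G2)) by (apply Rmult_le_compat_l; [lra|]; unfold C2; lra).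
    lra.
Qed.
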